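(* Consider the static power control game with $K\ge 2$ transmitters described in the context, for a fixed realization of the channel gains $g_1,\dots,g_K$. Let $\mathcal{U}_{\mathcal{G}}=\{(u_1(\underline{p}),\dots,u_K(\underline{p})) : \underline{p}\in \prod_{i=1}^K(0,P_i^{\max}]\}$ be the achievable utility region, let $u^{\max}$ be an upper bound on the utilities of all transmitters (so $\mathcal{U}_{\mathcal{G}}\subseteq[0,u^{\max}]^K$), and let $\mathcal{U}_{\mathcal{G}}^C=[0,u^{\max}]^K\setminus\mathcal{U}_{\mathcal{G}}$. If $\mathcal{U}_{\mathcal{G}}$ is convex or $\mathcal{U}_{\mathcal{G}}^C$ is convex, then the utility vector $\underline{u}(\tilde{\underline{p}})=(u_1(\tilde{\underline{p}}),\dots,u_K(\tilde{\underline{p}}))$ is Pareto-optimal, i.e. there is no feasible power profile $\underline{p}$ with $u_i(\underline{p})\ge u_i(\tilde{\underline{p}})$ for all $i$ and strict inequality for some $i$.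
   Context: There are $K\ge2$ transmitters $i\in\mathcal{K}=\{1,\dots,K\}$ sending to one receiver; $\sigma^2>0$ is the noise variance; transmitter $i$ has complex channel gain $g_i$ with $|g_i|^2>0$, transmission rate $R_i>0$, and chooses a transmit power $p_i\in[0,P_i^{\max}]$. For a power profile $\underline{p}=(p_1,\dots,p_K)$, $\mathrm{SINR}_i=\frac{p_i|g_i|^2}{\sum_{j\neq i}p_j|g_j|^2+\sigma^2}$ and the utility (energy efficiency) of transmitter $i$ is $u_i(\underline{p})=\frac{R_i f(\mathrm{SINR}_i)}{p_i}$, where $f$ is a sigmoidal efficiency function (the block success rate), common to all users, with $f(0)=0$. It is assumed that there exists $x_0\in\,]0,\frac{1}{K-1}[$ such that $\frac{f''(x)}{f'(x)}-\frac{2(K-1)}{1-(K-1)x}$ is strictly positive on $]0,x_0[$ and strictly negative on $]x_0,\frac1{K-1}[$; under this assumption $\tilde\gamma$ denotes the unique solution in $]0,\frac1{K-1}[$ of $x[1-(K-1)x]f'(x)-f(x)=0$. The operating point is the power profile $\tilde{\underline{p}}$ with $\tilde p_i=\frac{\sigma^2}{|g_i|^2}\frac{\tilde\gamma}{1-(K-1)\tilde\gamma}$ for all $i$ (it gives every user SINR $\tilde\gamma$); the maximal powers $P_i^{\max}$ are assumed large enough that $\tilde p_i\le P_i^{\max}$. *)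

(* Defs.v *)
From Stdlib Require Import Reals Lra List.
From Coquelicot Require Import Coquelicot.
Import ListNotations.
Open Scope R_scope.

Definition convex_on (I : R -> Prop) (f : R -> R) : Prop :=
  forall x y t, I x -> I y -> 0 <= t <= 1 ->
    f (t * x + (1 - t) * y) <= t * f x + (1 - t) * f y.

Definition concave_on (I : R -> Prop) (f : R -> R) : Prop :=
  convex_on I (fun x => - f x).

Definition sigmoidal (f : R -> R) : Prop :=
  f 0 = 0 /\
  filterlim f (at_right 0) (locally (f 0)) /\
  (forall x, 0 < x -> ex_derive f x /\ ex_derive (Derive f) x) /\
  (forall x y, 0 <= x -> x <= y -> f x <= f y) /\
  is_lim f p_infty 1 /\
  (exists xs, 0 < xs /\
     convex_on (fun x => 0 <= x <= xs) f /\
     concave_on (fun x => xs <= x) f).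

Definition sum_others (K i : nat) (a : nat -> R) : R :=
  fold_right Rplus 0
    (map (fun j => if Nat.eqb j i then 0 else a j) (seq 0 K)).

Definition gain2 (g : nat -> C) (j : nat) : R := (Cmod (g j)) ^ 2.

Definition SINR (K : nat) (sigma2 : R) (g : nat -> C) (p : nat -> R) (i : nat) : R :=
  p i * gain2 g i / (sum_others K i (fun j => p j * gain2 g j) + sigma2).

Definition utility (K : nat) (sigma2 : R) (g : nat -> C) (Rate : nat -> R)
    (f : R -> R) (p : nat -> R) (i : nat) : R :=
  Rate i * f (SINR K sigma2 g p i) / p i.

Definition feasible (K : nat) (Pmax : nat -> R) (p : nat -> R) : Prop :=
  forall i, (i < K)%nat -> 0 < p i <= Pmax i.

(* Achievable utility region U_G (vectors are nat -> R, only the first K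
   coordinates are relevant: the set is the cylinder over the region in R^K). *)
Definition utility_region K sigma2 g Rate f Pmax : (nat -> R) -> Prop :=
  fun v => exists p, feasible K Pmax p /\
             forall i, (i < K)%nat -> v i = utility K sigma2 g Rate f p i.

Definition utility_region_compl K sigma2 g Rate f Pmax (umax : R) : (nat -> R) -> Prop :=
  fun v => (forall i, (i < K)%nat -> 0 <= v i <= umax) /\
           ~ utility_region K sigma2 g Rate f Pmax v.

Definition convex_set (S : (nat -> R) -> Prop) : Prop :=
  forall v w t, S v -> S w -> 0 <= t <= 1 ->
    S (fun i => t * v i + (1 - t) * w i).

Definition p_tilde (K : nat) (sigma2 : R) (g : nat -> C) (gt : R) : nat -> R :=
  fun i => sigma2 / gain2 g i * (gt / (1 - (INR K - 1) * gt)).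

Definition pareto_optimal K sigma2 g Rate f Pmax (p0 : nat -> R) : Prop :=
  ~ exists p, feasible K Pmax p /\
      (forall i, (i < K)%nat ->
         utility K sigma2 g Rate f p0 i <= utility K sigma2 g Rate f p i) /\
      (exists i, (i < K)%nat /\
         utility K sigma2 g Rate f p0 i < utility K sigma2 g Rate f p i).

(* Main.v *)
Require Import Defs.
From Stdlib Require Import Reals Lra Lia List.
From Coquelicot Require Import Coquelicot.
Open Scope R_scope.

Definition sl (i : nat) (a : nat -> R) (l : list nat) : R :=
  fold_right Rplus 0 (map (fun j => if Nat.eqb j i then 0 else a j) l).

Lemma sum_others_sl K i a : sum_others K i a = sl i a (seq 0 K).
Proof. reflexivity. Qed.

Lemma sl_nil i a : sl i a nil = 0. Proof. reflexivity. Qed.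
Lemma sl_cons i a x l : sl i a (x :: l) = (if Nat.eqb x i then 0 else a x) + sl i a l.
Proof. reflexivity. Qed.

Lemma sl_ext i a b l : (forall j, In j l -> a j = b j) -> sl i a l = sl i b l.
Proof.
  unfold sl; induction l as [|x l IH]; intros H; simpl; auto.
  rewrite IH by (intros; apply H; simpl; auto).
  rewrite (H x) by (simpl; auto). reflexivity.
Qed.

Lemma sl_add i a b l : sl i (fun j => a j + b j) l = sl i a l + sl i b l.
Proof.
  unfold sl in *; induction l as [|x l IH]; simpl; [ring|]. rewrite IH.
  destruct (Nat.eqb x i); ring.
Qed.

Lemma sl_nonneg i a l : (forall j, In j l -> 0 <= a j) -> 0 <= sl i a l.
Proof.
  induction l as [|x l IH]; intros H; rewrite ?sl_nil, ?sl_cons; [lra|].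
  assert (0 <= sl i a l) by (apply IH; intros; apply H; simpl; auto).
  destruct (Nat.eqb x i); [lra|]. assert (0 <= a x) by (apply H; simpl; auto). lra.
Qed.

Lemma sl_pos i a l j : (forall j, In j l -> 0 <= a j) -> In j l -> j <> i -> 0 < a j ->
  0 < sl i a l.
Proof.
  induction l as [|x l IH]; intros H Hj Hji Ha; simpl in Hj; [contradiction|]. rewrite sl_cons.
  destruct Hj as [<-|Hj].
  - apply Nat.eqb_neq in Hji. rewrite Hji.
    assert (0 <= sl i a l) by (apply sl_nonneg; intros; apply H; simpl; auto).
    lra.
  - assert (0 < sl i a l) by (apply IH; auto; intros; apply H; simpl; auto).
    destruct (Nat.eqb x i); [lra|]. assert (0 <= a x) by (apply H; simpl; auto). lra.
Qed.

Lemma sl_const_out i r n s : (i < s)%nat -> sl i (fun _ => r) (seq s n) = INR n * r.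
Proof.
  revert s; induction n as [|n IH]; intros s Hs; simpl seq; rewrite ?sl_nil, ?sl_cons; [simpl; ring|].
  assert (Nat.eqb s i = false) by (apply Nat.eqb_neq; lia). rewrite H.
  rewrite IH by lia. rewrite S_INR. destruct n; simpl; ring.
Qed.

Lemma sl_const_in i r n s : (s <= i < s + n)%nat -> sl i (fun _ => r) (seq s n) = (INR n - 1) * r.
Proof.
  revert s; induction n as [|n IH]; intros s Hs; [lia|]. simpl seq; rewrite sl_cons.
  destruct (Nat.eq_dec s i) as [->|Hne].
  - rewrite Nat.eqb_refl. rewrite sl_const_out by lia.
    rewrite S_INR. ring.
  - assert (Nat.eqb s i = false) by (apply Nat.eqb_neq; lia). rewrite H.
    rewrite IH by lia. rewrite S_INR. ring.
Qed.

Lemma sum_others_const K i r : (i < K)%nat -> sum_others K i (fun _ => r) = (INR K - 1) * r.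
Proof. intros. rewrite sum_others_sl. apply sl_const_in. lia. Qed.

Lemma argmin_ex (q : nat -> R) n : (0 < n)%nat -> exists k, (k < n)%nat /\ forall j, (j < n)%nat -> q k <= q j.
Proof.
  induction n as [|n IH]; intros Hn; [lia|].
  destruct n as [|n].
  - exists 0%nat. split; [lia|]. intros j Hj. assert (j = 0%nat) by lia. subst; lra.
  - destruct IH as [k [Hk Hmin]]; [lia|].
    destruct (Rle_lt_dec (q k) (q (S n))).
    + exists k. split; [lia|]. intros j Hj. destruct (Nat.eq_dec j (S n)); [subst; auto|]. apply Hmin; lia.
    + exists (S n). split; [lia|]. intros j Hj. destruct (Nat.eq_dec j (S n)); [subst; lra|].
      specialize (Hmin j ltac:(lia)). lra.
Qed.

Lemma derive_cont (h : R -> R) x l : is_derive h x l -> continuity_pt h x.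
Proof.
  intros H. apply continuity_pt_filterlim. apply (ex_derive_continuous h x).
  exists l. exact H.
Qed.

Lemma ivt_local (h : R -> R) a b : a < b -> (forall x, a <= x <= b -> continuity_pt h x) ->
  h a * h b < 0 -> exists z, a < z < b /\ h z = 0.
Proof.
  intros Hab Hc Hp.
  destruct (Rlt_or_le (h a) 0) as [Ha|Ha].
  - assert (Hb : 0 < h b) by nra.
    destruct (Ranalysis5.IVT_interv h a b Hc Hab Ha Hb) as [z [Hz Hz0]].
    exists z. split; auto. split.
    + destruct (Req_dec z a); [subst; lra|lra].
    + destruct (Req_dec z b); [subst; lra|lra].
  - assert (Ha' : 0 < h a) by (destruct Ha; [auto| rewrite <- H in Hp; lra]).
    assert (Hb : h b < 0) by nra.
    assert (Hc' : forall x, a <= x <= b -> continuity_pt (fun y => - h y) x).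
    { intros. apply continuity_pt_opp. auto. }
    destruct (Ranalysis5.IVT_interv (fun y => - h y) a b Hc' Hab ltac:(lra) ltac:(lra)) as [z [Hz Hz0]].
    exists z. split; [|lra]. split.
    + destruct (Req_dec z a); [subst; lra|lra].
    + destruct (Req_dec z b); [subst; lra|lra].
Qed.

Lemma mvt_local (h dh : R -> R) a b : a < b ->
  (forall x, a <= x <= b -> is_derive h x (dh x)) ->
  exists c, a <= c <= b /\ h b - h a = dh c * (b - a).
Proof.
  intros Hab Hd.
  destruct (MVT_gen h a b dh) as [c [Hc Heq]].
  - intros x Hx. rewrite Rmin_left in Hx by lra. rewrite Rmax_right in Hx by lra. apply Hd; lra.
  - intros x Hx. rewrite Rmin_left in Hx by lra. rewrite Rmax_right in Hx by lra.
    apply (derive_cont h x (dh x)). apply Hd; lra.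
  - rewrite Rmin_left in Hc by lra. rewrite Rmax_right in Hc by lra. exists c; auto.
Qed.
Definition AH (f : R -> R) (c x0 : R) : Prop :=
  (forall x, 0 < x -> ex_derive f x /\ ex_derive (Derive f) x) /\
  (forall x y, 0 <= x -> x <= y -> f x <= f y) /\ f 0 = 0 /\ 0 < c /\ 0 < x0 < 1 / c /\
  (forall x, 0 < x < x0 -> Derive (Derive f) x / Derive f x - 2 * c / (1 - c * x) > 0).

Lemma AH_df f c x0 : AH f c x0 -> forall x, 0 < x -> is_derive f x (Derive f x).
Proof. intros (HD & _) x Hx. apply Derive_correct. apply HD; auto. Qed.

Lemma AH_ddf f c x0 : AH f c x0 -> forall x, 0 < x -> is_derive (Derive f) x (Derive (Derive f) x).
Proof. intros (HD & _) x Hx. apply Derive_correct. apply HD; auto. Qed.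

Lemma AH_cx f c x0 : AH f c x0 -> forall x, x < x0 -> 0 < 1 - c * x.
Proof.
  intros (_ & _ & _ & Hc & Hx0 & _) x Hx.
  assert (c * x0 < 1). { destruct Hx0 as [_ H]. apply Rmult_lt_compat_l with (r := c) in H; auto.
    replace (c * (1 / c)) with 1 in H by (field; lra). lra. }
  assert (c * x < c * x0) by (apply Rmult_lt_compat_l; auto). lra.
Qed.

Lemma Df_nz f c x0 : AH f c x0 -> forall x, 0 < x < x0 -> Derive f x <> 0.
Proof.
  intros H x Hx E. pose proof (AH_cx f c x0 H x ltac:(lra)) as Hcx.
  destruct H as (_ & _ & _ & Hc & _ & Hp). specialize (Hp x Hx).
  rewrite E in Hp. unfold Rdiv in Hp. rewrite Rinv_0, Rmult_0_r in Hp.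
  assert (0 < 2 * c * / (1 - c * x)). { apply Rmult_lt_0_compat; [lra|]. apply Rinv_0_lt_compat; auto. }
  lra.
Qed.

Lemma Df_pos f c x0 : AH f c x0 -> forall x, 0 < x < x0 -> 0 < Derive f x.
Proof.
  intros H x Hx.
  destruct (Rlt_or_le 0 (Derive f x)) as [|Hle]; auto.
  assert (Hneg : Derive f x < 0) by (destruct Hle; auto; exfalso; apply (Df_nz f c x0 H x Hx); auto).
  destruct (mvt_local f (Derive f) (x/2) x ltac:(lra)) as [xi [Hxi Heq]].
  { intros y Hy. apply (AH_df f c x0 H). lra. }
  assert (f (x/2) <= f x). { destruct H as (_ & Hm & _). apply Hm; lra. }
  assert (Hge : 0 <= Derive f xi) by nra.
  assert (Hxi0 : 0 < Derive f xi).
  { destruct Hge as [|E]; auto. exfalso. apply (Df_nz f c x0 H xi); [lra|auto]. }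
  assert (xi < x) by (destruct (Req_dec xi x); [subst; lra|lra]).
  destruct (ivt_local (Derive f) xi x) as [z [Hz Hz0]]; auto.
  - intros y Hy. apply (derive_cont _ _ _ (AH_ddf f c x0 H y ltac:(lra))).
  - nra.
  - exfalso. apply (Df_nz f c x0 H z); [lra|auto].
Qed.

Lemma DDf_pos f c x0 : AH f c x0 -> forall x, 0 < x < x0 -> 0 < Derive (Derive f) x.
Proof.
  intros H x Hx. pose proof (Df_pos f c x0 H x Hx). pose proof (AH_cx f c x0 H x ltac:(lra)).
  destruct H as (_ & _ & _ & Hc & _ & Hp). specialize (Hp x Hx).
  assert (0 < 2 * c / (1 - c * x)) by (apply Rdiv_lt_0_compat; lra).
  assert (0 < Derive (Derive f) x / Derive f x) by lra.
  replace (Derive (Derive f) x) with (Derive (Derive f) x / Derive f x * Derive f x) by (field; lra).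
  apply Rmult_lt_0_compat; auto.
Qed.

Lemma Df_incr f c x0 : AH f c x0 -> forall a b, 0 < a -> a <= b -> b < x0 -> Derive f a <= Derive f b.
Proof.
  intros H a b Ha Hab Hb. destruct Hab as [Hab|E]; [|subst; lra].
  destruct (mvt_local (Derive f) (Derive (Derive f)) a b Hab) as [xi [Hxi Heq]].
  { intros y Hy. apply (AH_ddf f c x0 H). lra. }
  pose proof (DDf_pos f c x0 H xi ltac:(lra)). nra.
Qed.

Lemma f_pos f c x0 : AH f c x0 -> forall y, 0 < y -> 0 < f y.
Proof.
  intros H y Hy. pose proof H as (_ & Hm & Hf0 & _ & Hx0 & _).
  set (m := Rmin y (x0 / 2)).
  assert (0 < m /\ m <= y /\ m < x0) as (Hm0 & Hmy & Hmx).
  { unfold m. split; [apply Rmin_glb_lt; lra|]. split; [apply Rmin_l|].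
    apply Rle_lt_trans with (x0/2); [apply Rmin_r|lra]. }
  destruct (mvt_local f (Derive f) (m/2) m ltac:(lra)) as [xi [Hxi Heq]].
  { intros z Hz. apply (AH_df f c x0 H). lra. }
  pose proof (Df_pos f c x0 H xi ltac:(lra)).
  assert (f 0 <= f (m/2)) by (apply Hm; lra).
  assert (f m <= f y) by (apply Hm; lra).
  nra.
Qed.

Definition hh (f : R -> R) (c x : R) : R := x * (1 - c * x) * Derive f x - f x.

Lemma hh_derive f c x0 : AH f c x0 -> forall x, 0 < x ->
  is_derive (hh f c) x (x * ((1 - c * x) * Derive (Derive f) x - 2 * c * Derive f x)).
Proof.
  intros H x Hx. pose proof H as (HD & _). destruct (HD x Hx) as [H1 H2].
  unfold hh. auto_derive; auto.
  change (fun x0 : R => f x0) with f. change (fun x0 => Derive f x0) with (Derive f). ring.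
Qed.

Lemma hh_cont f c x0 : AH f c x0 -> forall x, 0 < x -> continuity_pt (hh f c) x.
Proof. intros H x Hx. eapply derive_cont. apply (hh_derive f c x0 H x Hx). Qed.

Lemma hh_incr f c x0 : AH f c x0 -> forall a b, 0 < a -> a < b -> b < x0 -> hh f c a < hh f c b.
Proof.
  intros H a b Ha Hab Hb.
  destruct (mvt_local (hh f c) (fun x => x * ((1 - c * x) * Derive (Derive f) x - 2 * c * Derive f x)) a b Hab) as [xi [Hxi Heq]].
  { intros y Hy. apply (hh_derive f c x0 H). lra. }
  pose proof (Df_pos f c x0 H xi ltac:(lra)) as Hd.
  pose proof (AH_cx f c x0 H xi ltac:(lra)) as Hcx.
  pose proof H as (_ & _ & _ & Hc & _ & Hp). specialize (Hp xi ltac:(lra)).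
  assert (E : (1 - c * xi) * Derive (Derive f) xi - 2 * c * Derive f xi =
     Derive f xi * (1 - c * xi) * (Derive (Derive f) xi / Derive f xi - 2 * c / (1 - c * xi)))
    by (field; lra).
  assert (0 < (1 - c * xi) * Derive (Derive f) xi - 2 * c * Derive f xi).
  { rewrite E. apply Rmult_lt_0_compat; [apply Rmult_lt_0_compat|]; lra. }
  assert (0 < xi * ((1 - c * xi) * Derive (Derive f) xi - 2 * c * Derive f xi))
    by (apply Rmult_lt_0_compat; lra).
  nra.
Qed.

Lemma hh_near0 f c x0 xs gt : AH f c x0 -> 0 < xs -> convex_on (fun x => 0 <= x <= xs) f ->
  0 < gt -> exists y, 0 < y < gt /\ 0 < hh f c y.
Proof.
  intros H Hxs Hconv Hgt. pose proof H as (_ & Hm & Hf0 & Hc & Hx0 & _).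
  set (y0 := Rmin gt x0 / 2).
  assert (Hy0 : 0 < y0 /\ y0 < gt /\ y0 < x0).
  { unfold y0. assert (0 < Rmin gt x0) by (apply Rmin_glb_lt; lra).
    pose proof (Rmin_l gt x0). pose proof (Rmin_r gt x0). lra. }
  destruct (Rlt_or_le 0 (hh f c y0)) as [Hp|Hn].
  { exists y0. split; [lra|auto]. }
  exfalso.
  set (z1 := y0 / 2).
  assert (Hz1 : hh f c z1 < hh f c y0) by (apply (hh_incr f c x0 H); unfold z1; lra).
  set (d := - hh f c z1).
  assert (Hd : 0 < d) by (unfold d; lra).
  set (D := Derive f z1). assert (HD : 0 < D) by (apply (Df_pos f c x0 H); unfold z1; lra).
  set (F := f z1). assert (HF : 0 < F) by (apply (f_pos f c x0 H); unfold z1; lra).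
  set (z := Rmin (Rmin z1 xs) (Rmin 1 (d / (2 * (c * D + 1)))) / 2).
  assert (Hq : 0 < d / (2 * (c * D + 1))) by (apply Rdiv_lt_0_compat; nra).
  assert (Hz : 0 < z /\ z < z1 /\ z <= xs /\ z <= 1 /\ z <= d / (2 * (c * D + 1))).
  { unfold z. assert (0 < z1) by (unfold z1; lra).
    assert (0 < Rmin (Rmin z1 xs) (Rmin 1 (d / (2 * (c * D + 1))))).
    { apply Rmin_glb_lt; apply Rmin_glb_lt; lra. }
    pose proof (Rmin_l (Rmin z1 xs) (Rmin 1 (d / (2 * (c * D + 1))))).
    pose proof (Rmin_r (Rmin z1 xs) (Rmin 1 (d / (2 * (c * D + 1))))).
    pose proof (Rmin_l z1 xs). pose proof (Rmin_r z1 xs).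
    pose proof (Rmin_l 1 (d / (2 * (c * D + 1)))). pose proof (Rmin_r 1 (d / (2 * (c * D + 1)))).
    lra. }
  destruct Hz as (Hz0 & Hzz1 & Hzxs & Hz1' & Hzd).
  assert (Hz1pos : z1 < x0) by (unfold z1; lra).
  set (th := Rmin (1/2) (d / (2 * (F + 1)))).
  assert (Hth : 0 < th /\ th <= 1/2 /\ th <= d / (2 * (F + 1))).
  { unfold th. assert (0 < d / (2 * (F + 1))) by (apply Rdiv_lt_0_compat; lra).
    pose proof (Rmin_l (1/2) (d / (2 * (F + 1)))). pose proof (Rmin_r (1/2) (d / (2 * (F + 1)))).
    split; [apply Rmin_glb_lt; lra|]. lra. }
  destruct Hth as (Hth0 & Hth1 & Hthd).
  set (e := th * z).
  assert (He : 0 < e < z) by (unfold e; split; nra).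
  assert (Hfe : f e <= th * f z).
  { pose proof (Hconv z 0 th ltac:(lra) ltac:(lra) ltac:(lra)) as Hcv.
    replace (th * z + (1 - th) * 0) with e in Hcv by (unfold e; ring).
    rewrite Hf0 in Hcv. lra. }
  assert (Hfz : f z <= F) by (unfold F; apply Hm; lra).
  assert (Hfz0 : 0 <= f z) by (rewrite <- Hf0; apply Hm; lra).
  destruct (mvt_local f (Derive f) e z ltac:(lra)) as [xi [Hxi Heq]].
  { intros y Hy. apply (AH_df f c x0 H). lra. }
  pose proof (Df_pos f c x0 H xi ltac:(lra)) as Hdxi.
  assert (Hdxz : Derive f xi <= Derive f z) by (apply (Df_incr f c x0 H); lra).
  assert (HdzD : Derive f z <= D) by (unfold D; apply (Df_incr f c x0 H); lra).
  assert (Hfzb : f z <= f e + Derive f z * z) by nra.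
  assert (Hhz : hh f c z >= - (c * z * z * D) - th * F).
  { unfold hh.
    assert (E1 : z * (1 - c * z) * Derive f z - f z >= - (c * z * z * Derive f z) - f e) by lra.
    assert (E2 : c * z * z * Derive f z <= c * z * z * D).
    { apply Rmult_le_compat_l; auto. apply Rmult_le_pos; [apply Rmult_le_pos|]; lra. }
    assert (E3 : th * f z <= th * F) by (apply Rmult_le_compat_l; lra).
    lra. }
  assert (Hb1 : c * z * z * D <= c * z * D) by (assert (0 <= c * z * D) by (apply Rmult_le_pos; [apply Rmult_le_pos|]; lra); nra).
  assert (Hb2 : c * z * D < d / 2).
  { assert (z * (2 * (c * D + 1)) <= d).
    { apply Rmult_le_compat_r with (r := 2 * (c * D + 1)) in Hzd; [|nra].
      replace (d / (2 * (c * D + 1)) * (2 * (c * D + 1))) with d in Hzd by (field; nra). lra. }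
    nra. }
  assert (Hb3 : th * F < d / 2 + 0).
  { apply Rmult_le_compat_r with (r := 2 * (F + 1)) in Hthd; [|lra].
    replace (d / (2 * (F + 1)) * (2 * (F + 1))) with d in Hthd by (field; lra). nra. }
  assert (Hlt : hh f c z < hh f c z1) by (apply (hh_incr f c x0 H); lra).
  unfold d in *. lra.
Qed.

Lemma hh_right f c x0 gt : AH f c x0 -> 0 < gt < 1 / c ->
  (forall x, 0 < x < 1 / c -> hh f c x = 0 -> x = gt) ->
  forall x, gt < x < 1 / c -> hh f c x < 0.
Proof.
  intros H Hgt Hu x Hx. pose proof H as (_ & _ & _ & Hc & _).
  assert (Hend : hh f c (1 / c) < 0).
  { unfold hh. replace (1 - c * (1 / c)) with 0 by (field; lra).
    pose proof (f_pos f c x0 H (1 / c) ltac:(lra)). lra. }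
  destruct (Rlt_or_le (hh f c x) 0) as [|Hle]; auto. exfalso.
  destruct Hle as [Hpos|E]; [|symmetry in E; apply Hu in E; lra].
  destruct (ivt_local (hh f c) x (1 / c)) as [z [Hz Hz0]]; [lra| |nra|].
  - intros y Hy. apply (hh_cont f c x0 H). lra.
  - apply Hu in Hz0; lra.
Qed.

Lemma hh_left f c x0 xs gt : AH f c x0 -> 0 < xs -> convex_on (fun x => 0 <= x <= xs) f ->
  0 < gt < 1 / c ->
  (forall x, 0 < x < 1 / c -> hh f c x = 0 -> x = gt) ->
  forall x, 0 < x < gt -> 0 < hh f c x.
Proof.
  intros H Hxs Hcv Hgt Hu x Hx.
  destruct (hh_near0 f c x0 xs gt H Hxs Hcv ltac:(lra)) as [y [Hy Hhy]].
  destruct (Rlt_or_le 0 (hh f c x)) as [|Hle]; auto. exfalso.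
  destruct Hle as [Hneg|E]; [|apply Hu in E; lra].
  destruct (Rlt_or_le x y) as [Hxy|Hyx].
  - destruct (ivt_local (hh f c) x y) as [z [Hz Hz0]]; [lra| |nra|].
    + intros w Hw. apply (hh_cont f c x0 H). lra.
    + apply Hu in Hz0; lra.
  - destruct Hyx as [Hyx|E]; [|subst; lra].
    destruct (ivt_local (hh f c) y x) as [z [Hz Hz0]]; [lra| |nra|].
    + intros w Hw. apply (hh_cont f c x0 H). lra.
    + apply Hu in Hz0; lra.
Qed.

Definition chi (f : R -> R) (c x : R) : R := f x * (1 - c * x) / x.

Lemma chi_derive f c x0 : AH f c x0 -> forall x, 0 < x -> is_derive (chi f c) x (hh f c x / (x * x)).
Proof.
  intros H x Hx. pose proof H as (HD & _). destruct (HD x Hx) as [H1 H2].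
  unfold chi, hh. auto_derive.
  - split; auto. split; auto. lra.
  - change (fun x0 : R => f x0) with f. field. lra.
Qed.

Lemma chi_max f c x0 xs gt : AH f c x0 -> 0 < xs -> convex_on (fun x => 0 <= x <= xs) f ->
  0 < gt < 1 / c -> hh f c gt = 0 ->
  (forall x, 0 < x < 1 / c -> hh f c x = 0 -> x = gt) ->
  forall t, 0 < t < 1 / c -> chi f c gt <= chi f c t -> t = gt.
Proof.
  intros H Hxs Hcv Hgt Hhgt Hu t Ht Hle.
  pose proof (hh_left f c x0 xs gt H Hxs Hcv Hgt Hu) as HL.
  pose proof (hh_right f c x0 gt H Hgt Hu) as HR.
  destruct (Req_dec t gt) as [|Hne]; auto. exfalso.
  set (m := (t + gt) / 2).
  destruct (Rlt_or_le t gt) as [Hlt|Hge].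
  - destruct (mvt_local (chi f c) (fun x => hh f c x / (x * x)) t m ltac:(unfold m; lra)) as [a [Ha Ea]].
    { intros y Hy. apply (chi_derive f c x0 H). unfold m in Hy; lra. }
    destruct (mvt_local (chi f c) (fun x => hh f c x / (x * x)) m gt ltac:(unfold m; lra)) as [b [Hb Eb]].
    { intros y Hy. apply (chi_derive f c x0 H). unfold m in Hy; lra. }
    assert (0 < hh f c a / (a * a)) by (apply Rdiv_lt_0_compat; [apply HL; unfold m in Ha; lra|nra]).
    assert (0 <= hh f c b / (b * b)).
    { destruct (Req_dec b gt) as [->|Hb']; [rewrite Hhgt; unfold Rdiv; lra|].
      left. apply Rdiv_lt_0_compat; [apply HL; unfold m in Hb; lra|nra]. }
    assert (0 < m - t) by (unfold m; lra). assert (0 <= gt - m) by (unfold m; lra).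
    nra.
  - assert (Hgt' : gt < t) by lra.
    destruct (mvt_local (chi f c) (fun x => hh f c x / (x * x)) gt m ltac:(unfold m; lra)) as [a [Ha Ea]].
    { intros y Hy. apply (chi_derive f c x0 H). unfold m in Hy; lra. }
    destruct (mvt_local (chi f c) (fun x => hh f c x / (x * x)) m t ltac:(unfold m; lra)) as [b [Hb Eb]].
    { intros y Hy. apply (chi_derive f c x0 H). unfold m in Hy; lra. }
    assert (hh f c b / (b * b) < 0).
    { unfold Rdiv. assert (0 < / (b * b)) by (apply Rinv_0_lt_compat; unfold m in Hb; nra).
      assert (hh f c b < 0) by (apply HR; unfold m in Hb; lra). nra. }
    assert (hh f c a / (a * a) <= 0).
    { destruct (Req_dec a gt) as [->|Ha']; [rewrite Hhgt; unfold Rdiv; lra|].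
      unfold Rdiv. assert (0 < / (a * a)) by (apply Rinv_0_lt_compat; nra).
      assert (hh f c a < 0) by (apply HR; unfold m in Ha; lra). nra. }
    assert (0 < t - m) by (unfold m; lra). assert (0 <= m - gt) by (unfold m; lra).
    nra.
Qed.

Lemma sum_others_ext K i a b : (forall j, (j < K)%nat -> a j = b j) -> sum_others K i a = sum_others K i b.
Proof.
  intros H. rewrite !sum_others_sl. apply sl_ext. intros j Hj. apply in_seq in Hj. apply H. lia.
Qed.

Lemma sum_others_add K i a b : sum_others K i (fun j => a j + b j) = sum_others K i a + sum_others K i b.
Proof. rewrite !sum_others_sl. apply sl_add. Qed.

Theorem proposition5
  (K : nat) (HK : (2 <= K)%nat)
  (sigma2 : R) (Hsigma : 0 < sigma2)
  (g : nat -> C) (Hg : forall i, (i < K)%nat -> 0 < Cmod (g i))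
  (Rate : nat -> R) (HR : forall i, (i < K)%nat -> 0 < Rate i)
  (Pmax : nat -> R)
  (f : R -> R) (Hf : sigmoidal f)
  (Hx0 : exists x0, 0 < x0 < 1 / (INR K - 1) /\
     (forall x, 0 < x < x0 ->
        Derive (Derive f) x / Derive f x
          - 2 * (INR K - 1) / (1 - (INR K - 1) * x) > 0) /\
     (forall x, x0 < x < 1 / (INR K - 1) ->
        Derive (Derive f) x / Derive f x
          - 2 * (INR K - 1) / (1 - (INR K - 1) * x) < 0))
  (gt : R) (Hgt : 0 < gt < 1 / (INR K - 1))
  (Hgt_sol : gt * (1 - (INR K - 1) * gt) * Derive f gt - f gt = 0)
  (Hgt_uniq : forall x, 0 < x < 1 / (INR K - 1) ->
     x * (1 - (INR K - 1) * x) * Derive f x - f x = 0 -> x = gt)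
  (HPmax : forall i, (i < K)%nat -> p_tilde K sigma2 g gt i <= Pmax i)
  (umax : R)
  (Humax : forall p, feasible K Pmax p ->
     forall i, (i < K)%nat -> 0 <= utility K sigma2 g Rate f p i <= umax)
  (Hconv : convex_set (utility_region K sigma2 g Rate f Pmax) \/
           convex_set (utility_region_compl K sigma2 g Rate f Pmax umax)) :
  pareto_optimal K sigma2 g Rate f Pmax (p_tilde K sigma2 g gt).
Proof.
  set (c := INR K - 1) in *.
  assert (Hc : 1 <= c).
  { unfold c. apply le_INR in HK. simpl in HK. lra. }
  destruct Hf as (Hf0 & _ & HD & Hmono & _ & (xs & Hxs & Hcv & _)).
  destruct Hx0 as (x0 & Hx0r & Hp & _).
  assert (H : AH f c x0) by (repeat split; auto; try lra; apply HD; auto).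
  assert (Hcg : 0 < 1 - c * gt).
  { destruct Hgt as [_ Hgt2]. apply Rmult_lt_compat_l with (r := c) in Hgt2; [|lra].
    replace (c * (1 / c)) with 1 in Hgt2 by (field; lra). lra. }
  assert (Hgain : forall j, (j < K)%nat -> 0 < gain2 g j).
  { intros j Hj. unfold gain2. specialize (Hg j Hj). simpl. nra. }
  intros [p [Hfe [Hge [i [Hi Hlt]]]]].
  set (q := fun j => p j * gain2 g j).
  set (Q := sigma2 * (gt / (1 - c * gt))).
  assert (HQ : 0 < Q) by (unfold Q; apply Rmult_lt_0_compat; auto; apply Rdiv_lt_0_compat; lra).
  assert (Hqpos : forall j, (j < K)%nat -> 0 < q j).
  { intros j Hj. unfold q. destruct (Hfe j Hj). apply Rmult_lt_0_compat; auto. }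
  assert (Hpt : forall j, (j < K)%nat -> p_tilde K sigma2 g gt j * gain2 g j = Q).
  { intros j Hj. unfold p_tilde, Q. fold c. specialize (Hgain j Hj). field. lra. }
  assert (Hptpos : forall j, (j < K)%nat -> 0 < p_tilde K sigma2 g gt j).
  { intros j Hj. pose proof (Hpt j Hj). pose proof (Hgain j Hj).
    replace (p_tilde K sigma2 g gt j) with (Q / gain2 g j) by (rewrite <- H0; field; lra).
    apply Rdiv_lt_0_compat; auto. }
  assert (HSt : forall j, (j < K)%nat -> SINR K sigma2 g (p_tilde K sigma2 g gt) j = gt).
  { intros j Hj. unfold SINR. rewrite (Hpt j Hj).
    rewrite (sum_others_ext K j _ (fun _ => Q)) by auto.
    rewrite sum_others_const by auto. fold c. unfold Q. field. split; lra. }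
  destruct (argmin_ex q K ltac:(lia)) as [k [Hk Hmin]].
  set (Dsum := sum_others K k (fun j => q j - q k)).
  assert (HI : sum_others K k q = c * q k + Dsum).
  { unfold Dsum. rewrite (sum_others_ext K k q (fun j => q k + (q j - q k))) by (intros; ring).
    rewrite sum_others_add, sum_others_const by auto. reflexivity. }
  assert (HDs : 0 <= Dsum).
  { unfold Dsum. rewrite sum_others_sl. apply sl_nonneg. intros j Hj. apply in_seq in Hj.
    specialize (Hmin j ltac:(lia)). lra. }
  set (gam := SINR K sigma2 g p k).
  assert (Hgam : gam = q k / (c * q k + Dsum + sigma2)).
  { unfold gam, SINR. fold (q k). change (fun j => p j * gain2 g j) with q. rewrite HI. reflexivity. }
  pose proof (Hqpos k Hk) as Hqk.
  assert (Hgam0 : 0 < gam) by (rewrite Hgam; apply Rdiv_lt_0_compat; nra).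
  assert (Hgam1 : gam < 1 / c).
  { rewrite Hgam. assert (HT : 0 < c * q k + Dsum + sigma2) by nra.
    assert (E : 1 / c - q k / (c * q k + Dsum + sigma2) = (Dsum + sigma2) / (c * (c * q k + Dsum + sigma2)))
      by (field; lra).
    assert (0 < (Dsum + sigma2) / (c * (c * q k + Dsum + sigma2))) by (apply Rdiv_lt_0_compat; nra).
    lra. }
  set (A := Rate k * gain2 g k / sigma2).
  assert (HA : 0 < A) by (unfold A; apply Rdiv_lt_0_compat; [apply Rmult_lt_0_compat|]; auto).
  assert (Hut : utility K sigma2 g Rate f (p_tilde K sigma2 g gt) k = A * chi f c gt).
  { unfold utility. rewrite (HSt k Hk). unfold A, chi.
    pose proof (Hpt k Hk). pose proof (Hgain k Hk).
    replace (p_tilde K sigma2 g gt k) with (Q / gain2 g k) by (rewrite <- H0; field; lra).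
    unfold Q. field. repeat split; lra. }
  assert (Hu : utility K sigma2 g Rate f p k = A * chi f c gam - A * f gam * Dsum / q k).
  { unfold utility. fold gam. unfold A, chi.
    assert (Hpk : p k = q k / gain2 g k) by (unfold q; field; pose proof (Hgain k Hk); lra).
    assert (E : f gam * (1 - c * gam) / gam = f gam * (Dsum + sigma2) / q k).
    { rewrite Hgam. field. split; nra. }
    rewrite E, Hpk. pose proof (Hgain k Hk). field. repeat split; lra. }
  pose proof (Hge k Hk) as Hk_le. rewrite Hut, Hu in Hk_le.
  assert (Hfg : 0 <= f gam) by (rewrite <- Hf0; apply Hmono; lra).
  assert (Hslack : 0 <= A * f gam * Dsum / q k).
  { apply Rdiv_le_0_compat; auto. apply Rmult_le_pos; auto. apply Rmult_le_pos; lra. }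
  assert (Hchi : chi f c gt <= chi f c gam).
  { apply (Rmult_le_reg_l A); auto. lra. }
  assert (Hgeq : gam = gt).
  { apply (chi_max f c x0 xs gt H Hxs Hcv Hgt Hgt_sol Hgt_uniq gam); auto. }
  rewrite Hgeq in Hk_le, Hslack.
  pose proof (f_pos f c x0 H gt ltac:(lra)) as Hfgt.
  assert (HD0 : Dsum = 0).
  { assert (A * f gt * Dsum / q k <= 0) by lra.
    destruct HDs as [HDs|]; auto. exfalso.
    assert (0 < A * f gt * Dsum / q k).
    { apply Rdiv_lt_0_compat; auto. apply Rmult_lt_0_compat; auto. apply Rmult_lt_0_compat; auto. }
    lra. }
  assert (Hqall : forall j, (j < K)%nat -> q j = q k).
  { intros j Hj. pose proof (Hmin j Hj) as Hmj. destruct Hmj as [Hm|]; auto. exfalso.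
    assert (0 < Dsum).
    { unfold Dsum. rewrite sum_others_sl. apply (sl_pos _ _ _ j).
      - intros l Hl. apply in_seq in Hl. specialize (Hmin l ltac:(lia)). lra.
      - apply in_seq. lia.
      - intros E; subst; lra.
      - lra. }
    lra. }
  assert (HqkQ : q k = Q).
  { rewrite Hgeq in Hgam. rewrite HD0 in Hgam. unfold Q.
    assert (gt * (c * q k + sigma2) = q k).
    { rewrite Hgam. field. nra. }
    apply (Rmult_eq_reg_r (1 - c * gt)); [|lra].
    replace (sigma2 * (gt / (1 - c * gt)) * (1 - c * gt)) with (gt * sigma2) by (field; lra).
    lra. }
  assert (Hpeq : forall j, (j < K)%nat -> p j = p_tilde K sigma2 g gt j).
  { intros j Hj. pose proof (Hqall j Hj) as E1. pose proof (Hpt j Hj) as E2. pose proof (Hgain j Hj).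
    rewrite HqkQ in E1. apply (Rmult_eq_reg_r (gain2 g j)); [|lra]. rewrite E2. exact E1. }
  assert (Heqi : utility K sigma2 g Rate f p i = utility K sigma2 g Rate f (p_tilde K sigma2 g gt) i).
  { unfold utility, SINR. rewrite (Hpeq i Hi).
    rewrite (sum_others_ext K i (fun j => p j * gain2 g j) (fun j => p_tilde K sigma2 g gt j * gain2 g j)).
    - reflexivity.
    - intros j Hj. rewrite (Hpeq j Hj). reflexivity. }
  lra.
Qed.
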